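(* Let $N\ge 0$ be an integer, and let $Q_K(f)=\sum_{k=1}^K w_k f(\xi_k)$ be a quadrature rule on the unit sphere $S^2\subset\mathbb{R}^3$ with real weights $w_k$ and nodes $\xi_k\in S^2$ having polar coordinates $(\theta_k,\phi_k)$, i.e. $\xi_k=(\sin\theta_k\cos\phi_k,\sin\theta_k\sin\phi_k,\cos\theta_k)$. Suppose: (i) for every $k$ there is a unique $j$ such that $\xi_j$ is the point with polar coordinates $(\theta_k,\phi_k+\pi)$ (i.e. $\xi_j=R_z\xi_k$ where $R_z(x,y,z)=(-x,-y,z)$), and $w_j=w_k$; (ii) for every $k$ there is a unique $j$ such that $\xi_j$ is the point with coordinates $(\theta_k+\pi,\pi-\phi_k)$ under the parametrization $(\theta,\phi)\mapsto(\sin\theta\cos\phi,\sin\theta\sin\phi,\cos\theta)$ (i.e. $\xi_j=R_x\xi_k$ where $R_x(x,y,z)=(x,-y,-z)$), and $w_j=w_k$. Then the system $$\sum_{k=1}^K w_k Y_n^m(\theta_k,\phi_k)=\sqrt{4\pi}\,\delta_{n0}\delta_{m0}\quad\text{for all integers } |m|\le n\le N$$ holds if and only if the following real system holds: $$\operatorname{Re}\sum_{k=1}^K w_k Y_n^m(\theta_k,\phi_k)=\sqrt{4\pi}\,\delta_{n0}\delta_{m0}\quad\text{for all }(m,n)\text{ with } m,n \text{ even},\ 0\le m\le n\le N,$$ $$\operatorname{Im}\sum_{k=1}^K w_k Y_n^m(\theta_k,\phi_k)=0\quad\text{for all }(m,n)\text{ with } m \text{ even},\ n\text{ odd},\ 0<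 m\le n\le N.$$
   Context: For integers $|m|\le n$, the spherical harmonic of degree $n$ and order $m$ is $$Y_n^m(\theta,\phi)=(-1)^m\sqrt{\frac{2n+1}{4\pi}\frac{(n-m)!}{(n+m)!}}\,P_n^m(\cos\theta)\,e^{im\phi},$$ where $P_n^m$ is the associated Legendre function (with the standard definition for negative $m$), regarded as a function on $S^2$ via polar coordinates $(\theta,\phi)\in[0,\pi]\times[0,2\pi)$. These satisfy $\int_{S^2}Y_n^m\,d\sigma=\sqrt{4\pi}\,\delta_{n0}\delta_{m0}$, so the first system in the claim expresses that $Q_K$ integrates exactly all spherical harmonics of degree at most $N$. *)

(* Defs.v *)
From Stdlib Require Import Reals Lra Lia ZArith Arith List.
Open Scope R_scope.

(* ---------- univariate real polynomials as coefficient lists (low degree first) ---------- *)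
Fixpoint peval (p : list R) (x : R) : R :=
  match p with nil => 0 | a :: q => a + x * peval q x end.

Fixpoint padd (p q : list R) : list R :=
  match p, q with
  | nil, _ => q
  | _, nil => p
  | a :: p', b :: q' => (a + b) :: padd p' q'
  end.

Fixpoint pmul (p q : list R) : list R :=
  match p with
  | nil => nil
  | a :: p' => padd (map (Rmult a) q) (0 :: pmul p' q)
  end.

Fixpoint ppow (p : list R) (n : nat) : list R :=
  match n with O => 1 :: nil | S n' => pmul p (ppow p n') end.

Fixpoint pderiv_aux (i : nat) (p : list R) : list R :=
  match p with nil => nil | a :: q => (INR i * a) :: pderiv_aux (S i) q end.

Definition pderiv (p : list R) : list R :=
  match p with nil => nil | _ :: q => pderiv_aux 1 q end.

Definition pderivn (k : nat) (p : list R) : list R := Nat.iter k pderiv p.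

(* ---------- Legendre polynomials (Rodrigues' formula) ---------- *)
Definition legendre (n : nat) : list R :=
  map (Rmult (/ (2 ^ n * INR (fact n))))
      (pderivn n (ppow ((-1) :: 0 :: 1 :: nil) n)).

(* associated Legendre function for m >= 0:
   P_n^m(x) = (1 - x^2)^{m/2} d^m/dx^m P_n(x)  (no Condon-Shortley phase;
   the phase (-1)^m appears explicitly in Y_n^m) *)
Definition assoc_legendre_nat (n m : nat) (x : R) : R :=
  (sqrt (1 - x ^ 2)) ^ m * peval (pderivn m (legendre n)) x.

Definition assoc_legendre (n : nat) (m : Z) (x : R) : R :=
  if (0 <=? m)%Z then assoc_legendre_nat n (Z.to_nat m) x
  else let m' := Z.to_nat (- m) in
       (-1) ^ m' * (INR (fact (n - m')) / INR (fact (n + m')))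
       * assoc_legendre_nat n m' x.

(* Y_n^m(θ,φ) = (-1)^m sqrt((2n+1)/(4π) (n-m)!/(n+m)!) P_n^m(cos θ) e^{imφ} *)
Definition sph_coef (n : nat) (m : Z) : R :=
  (-1) ^ (Z.abs_nat m) *
  sqrt ((2 * INR n + 1) / (4 * PI) *
        (INR (fact (Z.to_nat (Z.of_nat n - m))) /
         INR (fact (Z.to_nat (Z.of_nat n + m))))).

Definition Y_re (n : nat) (m : Z) (theta phi : R) : R :=
  sph_coef n m * assoc_legendre n m (cos theta) * cos (IZR m * phi).

Definition Y_im (n : nat) (m : Z) (theta phi : R) : R :=
  sph_coef n m * assoc_legendre n m (cos theta) * sin (IZR m * phi).

Definition sumK (K : nat) (f : nat -> R) : R :=
  fold_right Rplus 0 (map f (seq 0 K)).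

Definition QY_re (K : nat) (w theta phi : nat -> R) (n : nat) (m : Z) : R :=
  sumK K (fun k => w k * Y_re n m (theta k) (phi k)).
Definition QY_im (K : nat) (w theta phi : nat -> R) (n : nat) (m : Z) : R :=
  sumK K (fun k => w k * Y_im n m (theta k) (phi k)).

Definition delta00 (n : nat) (m : Z) : R :=
  if andb (Nat.eqb n 0) (Z.eqb m 0) then 1 else 0.

Definition point3 : Type := (R * R * R)%type.

Definition sph_point (theta phi : R) : point3 :=
  (sin theta * cos phi, sin theta * sin phi, cos theta).

Definition Rz (p : point3) : point3 :=
  match p with (x, y, z) => (- x, - y, z) end.
Definition Rx (p : point3) : point3 :=
  match p with (x, y, z) => (x, - y, - z) end.

(* Main.v *)
Require Import Defs.
From Stdlib Require Import Reals ZArith Arith List.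
From Stdlib Require Import Lra Lia Permutation ClassicalEpsilon.
Open Scope R_scope.

Definition good (b:bool) (p: list R) := forall i, nth i p 0 <> 0 -> Nat.even i = b.

Lemma nth_nil0 i : nth i (@nil R) 0 = 0.
Proof. destruct i; reflexivity. Qed.

Lemma nth_padd p q i : nth i (padd p q) 0 = nth i p 0 + nth i q 0.
Proof.
  revert q i; induction p as [|a p IH]; intros q i.
  - destruct i; simpl; ring.
  - destruct q as [|c q].
    + destruct i; simpl; ring.
    + destruct i; simpl; [ring| apply IH].
Qed.

Lemma nth_map_mult a p i : nth i (map (Rmult a) p) 0 = a * nth i p 0.
Proof.
  revert i; induction p as [|c p IH]; intros i.
  - destruct i; simpl; ring.
  - destruct i; simpl; [ring | apply IH].
Qed.

Lemma even_S i : Nat.even (S i) = negb (Nat.even i).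
Proof. rewrite Nat.even_succ, <- Nat.negb_even. reflexivity. Qed.

Lemma good_nil b : good b nil.
Proof. intros i H. rewrite nth_nil0 in H. lra. Qed.

Lemma good_padd b p q : good b p -> good b q -> good b (padd p q).
Proof.
  intros Hp Hq i H. rewrite nth_padd in H.
  destruct (Req_dec (nth i p 0) 0) as [E|E]; [|now apply Hp].
  apply Hq. lra.
Qed.

Lemma good_map b a p : good b p -> good b (map (Rmult a) p).
Proof.
  intros Hp i H. rewrite nth_map_mult in H. apply Hp.
  intro E; apply H; rewrite E; ring.
Qed.

Lemma good_map0 b p : good b (map (Rmult 0) p).
Proof. intros i H. rewrite nth_map_mult in H. lra. Qed.

Lemma good_cons0 b p : good b p -> good (negb b) (0 :: p).
Proof.
  intros Hp [|i] H; simpl in H.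
  - lra.
  - rewrite even_S, (Hp i H). reflexivity.
Qed.

Lemma good_tail b a p : good b (a :: p) -> good (negb b) p.
Proof.
  intros Hp i H. assert (E := Hp (S i) H). rewrite even_S in E.
  destruct (Nat.even i), b; simpl in *; congruence.
Qed.

Lemma good_head b a p : good b (a :: p) -> a <> 0 -> b = true.
Proof. intros Hp Ha. symmetry. exact (Hp 0%nat Ha). Qed.

Lemma good_pmul p q b1 b2 : good b1 p -> good b2 q -> good (Bool.eqb b1 b2) (pmul p q).
Proof.
  revert b1; induction p as [|a p IH]; intros b1 Hp Hq; simpl.
  - apply good_nil.
  - apply good_padd.
    + destruct (Req_dec a 0) as [E|E].
      * subst; apply good_map0.
      * rewrite (good_head _ _ _ Hp E). replace (Bool.eqb true b2) with b2 by (destruct b2; reflexivity). apply good_map; exact Hq.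
    + assert (H := good_cons0 _ _ (IH (negb b1) (good_tail _ _ _ Hp) Hq)).
      destruct b1, b2; exact H.
Qed.

Lemma good_base : good true ((-1) :: 0 :: 1 :: nil).
Proof.
  intros [|[|[|i]]] H; simpl in H; try reflexivity.
  - lra.
  - destruct i; simpl in H; lra.
Qed.

Lemma good_ppow p n : good true p -> good true (ppow p n).
Proof.
  intros Hp; induction n as [|n IH]; simpl.
  - intros [|i] H; simpl in H; [reflexivity|]. destruct i; simpl in H; lra.
  - exact (good_pmul _ _ _ _ Hp IH).
Qed.

Lemma nth_pderiv_aux q s i : nth i (pderiv_aux s q) 0 = INR (s + i) * nth i q 0.
Proof.
  revert s i; induction q as [|a q IH]; intros s i.
  - destruct i; simpl; ring.
  - destruct i; simpl.
    + rewrite Nat.add_0_r. reflexivity.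
    + rewrite IH. rewrite Nat.add_succ_r. reflexivity.
Qed.

Lemma nth_pderiv p i : nth i (pderiv p) 0 = INR (S i) * nth (S i) p 0.
Proof.
  destruct p as [|a q]; simpl.
  - destruct i; simpl; ring.
  - rewrite nth_pderiv_aux. reflexivity.
Qed.

Lemma good_pderiv b p : good b p -> good (negb b) (pderiv p).
Proof.
  intros Hp i H. rewrite nth_pderiv in H.
  assert (E : nth (S i) p 0 <> 0) by (intro E; apply H; rewrite E; ring).
  assert (E2 := Hp _ E). rewrite even_S in E2.
  destruct (Nat.even i), b; simpl in *; congruence.
Qed.

Lemma good_pderivn j k p : good (Nat.even j) p -> good (Nat.even (j + k)) (pderivn k p).
Proof.
  intros Hp; induction k as [|k IH].
  - rewrite Nat.add_0_r. exact Hp.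
  - change (pderivn (S k) p) with (pderiv (pderivn k p)).
    rewrite Nat.add_succ_r, even_S. apply good_pderiv, IH.
Qed.

Lemma good_legendre_deriv n m : good (Nat.even (n + m)) (pderivn m (legendre n)).
Proof.
  apply good_pderivn. unfold legendre. apply good_map.
  apply (good_pderivn 0 n). apply good_ppow, good_base.
Qed.

Lemma peval_good b p x : good b p -> peval p (-x) = (if b then 1 else -1) * peval p x.
Proof.
  revert b; induction p as [|a q IH]; intros b Hp; simpl.
  - ring.
  - rewrite (IH _ (good_tail _ _ _ Hp)). destruct b; simpl.
    + ring.
    + destruct (Req_dec a 0) as [E|E].
      * subst; ring.
      * discriminate (good_head _ _ _ Hp E).
Qed.

Lemma sign_even k : (if Nat.even k then 1 else -1) = (-1) ^ k.
Proof.
  induction k as [|k IH]; [reflexivity|].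
  rewrite even_S. simpl. rewrite <- IH. destruct (Nat.even k); simpl; ring.
Qed.

Lemma ALnat_neg n m x : assoc_legendre_nat n m (-x) = (-1) ^ (n + m) * assoc_legendre_nat n m x.
Proof.
  unfold assoc_legendre_nat.
  rewrite (peval_good _ _ x (good_legendre_deriv n m)), sign_even.
  replace ((-x)^2) with (x^2) by ring. ring.
Qed.

Lemma AL_neg n m x : assoc_legendre n m (-x) = (-1) ^ (n + Z.abs_nat m) * assoc_legendre n m x.
Proof.
  unfold assoc_legendre. destruct m as [|p|p]; simpl.
  - rewrite ALnat_neg. reflexivity.
  - rewrite ALnat_neg. reflexivity.
  - rewrite ALnat_neg. ring.
Qed.

Lemma ALnat_pole n m x : x ^ 2 = 1 -> (0 < m)%nat -> assoc_legendre_nat n m x = 0.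
Proof.
  intros Hx Hm. unfold assoc_legendre_nat.
  replace (1 - x^2) with 0 by lra. rewrite sqrt_0, pow_i by exact Hm. ring.
Qed.

Lemma AL_pole n m x : x ^ 2 = 1 -> m <> 0%Z -> assoc_legendre n m x = 0.
Proof.
  intros Hx Hm. unfold assoc_legendre. destruct m as [|p|p]; simpl.
  - congruence.
  - apply ALnat_pole; [exact Hx| lia].
  - rewrite ALnat_pole; [ring|exact Hx|lia].
Qed.

Lemma trig_z_nat a b k : cos a = - cos b -> sin a = - sin b ->
  cos (INR k * a) = (-1)^k * cos (INR k * b) /\ sin (INR k * a) = (-1)^k * sin (INR k * b).
Proof.
  intros Hc Hs. induction k as [|k [IHc IHs]].
  - simpl. rewrite !Rmult_0_l. split; ring.
  - rewrite S_INR. replace ((INR k + 1) * a) with (INR k * a + a) by ring.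
    replace ((INR k + 1) * b) with (INR k * b + b) by ring.
    rewrite !cos_plus, !sin_plus, IHc, IHs, Hc, Hs. simpl. split; ring.
Qed.

Lemma trig_x_nat a b k : cos a = cos b -> sin a = - sin b ->
  cos (INR k * a) = cos (INR k * b) /\ sin (INR k * a) = - sin (INR k * b).
Proof.
  intros Hc Hs. induction k as [|k [IHc IHs]].
  - simpl. rewrite !Rmult_0_l. rewrite sin_0. split; ring.
  - rewrite S_INR. replace ((INR k + 1) * a) with (INR k * a + a) by ring.
    replace ((INR k + 1) * b) with (INR k * b + b) by ring.
    rewrite !cos_plus, !sin_plus, IHc, IHs, Hc, Hs. split; ring.
Qed.

Lemma IZR_abs m : IZR m = INR (Z.abs_nat m) \/ IZR m = - INR (Z.abs_nat m).
Proof.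
  rewrite INR_IZR_INZ. rewrite Zabs2Nat.id_abs.
  destruct (Z_le_gt_dec 0 m).
  - left. rewrite Z.abs_eq by lia. reflexivity.
  - right. rewrite Z.abs_neq by lia. rewrite opp_IZR. ring.
Qed.

Lemma trig_z a b m : cos a = - cos b -> sin a = - sin b ->
  cos (IZR m * a) = (-1)^(Z.abs_nat m) * cos (IZR m * b) /\
  sin (IZR m * a) = (-1)^(Z.abs_nat m) * sin (IZR m * b).
Proof.
  intros Hc Hs. destruct (trig_z_nat a b (Z.abs_nat m) Hc Hs) as [C S].
  destruct (IZR_abs m) as [E|E]; rewrite E.
  - split; assumption.
  - rewrite !Ropp_mult_distr_l_reverse, !cos_neg, !sin_neg, C, S. split; ring.
Qed.

Lemma trig_x a b m : cos a = cos b -> sin a = - sin b ->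
  cos (IZR m * a) = cos (IZR m * b) /\ sin (IZR m * a) = - sin (IZR m * b).
Proof.
  intros Hc Hs. destruct (trig_x_nat a b (Z.abs_nat m) Hc Hs) as [C S].
  destruct (IZR_abs m) as [E|E]; rewrite E.
  - split; assumption.
  - rewrite !Ropp_mult_distr_l_reverse, !cos_neg, !sin_neg, C, S. split; ring.
Qed.

Lemma Y_negorder n (k : nat) x : (k <= n)%nat ->
  sph_coef n (- Z.of_nat k) * assoc_legendre n (- Z.of_nat k) x
  = (-1)^k * (sph_coef n (Z.of_nat k) * assoc_legendre n (Z.of_nat k) x).
Proof.
  intros Hk. destruct k as [|k].
  - simpl. ring.
  - set (k' := S k) in *.
    unfold sph_coef, assoc_legendre.
    replace (Z.abs_nat (- Z.of_nat k')) with k' by lia.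
    replace (Z.abs_nat (Z.of_nat k')) with k' by lia.
    replace (Z.to_nat (Z.of_nat n - - Z.of_nat k')) with (n + k')%nat by lia.
    replace (Z.to_nat (Z.of_nat n + - Z.of_nat k')) with (n - k')%nat by lia.
    replace (Z.to_nat (Z.of_nat n - Z.of_nat k')) with (n - k')%nat by lia.
    replace (Z.to_nat (Z.of_nat n + Z.of_nat k')) with (n + k')%nat by lia.
    replace ((0 <=? - Z.of_nat k')%Z) with false by (symmetry; apply Z.leb_gt; lia).
    replace ((0 <=? Z.of_nat k')%Z) with true by (symmetry; apply Z.leb_le; lia).
    replace (Z.to_nat (- - Z.of_nat k')) with k' by lia.
    rewrite Nat2Z.id.
    set (A := (2 * INR n + 1) / (4 * PI)).
    set (a := INR (fact (n - k'))). set (b := INR (fact (n + k'))).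
    set (P := assoc_legendre_nat n k' x).
    assert (HA : 0 < A) by (unfold A; apply Rdiv_lt_0_compat; [pose proof (pos_INR n); lra | pose proof PI_RGT_0; lra]).
    assert (Ha : 0 < a) by (unfold a; apply lt_0_INR, lt_O_fact).
    assert (Hb : 0 < b) by (unfold b; apply lt_0_INR, lt_O_fact).
    assert (E : sqrt (A * (b / a)) * (a / b) = sqrt (A * (a / b))).
    { symmetry. apply sqrt_lem_1.
      - apply Rmult_le_pos; [lra|]. apply Rlt_le, Rdiv_lt_0_compat; lra.
      - apply Rmult_le_pos; [apply sqrt_pos|]. apply Rlt_le, Rdiv_lt_0_compat; lra.
      - replace (sqrt (A * (b / a)) * (a / b) * (sqrt (A * (b / a)) * (a / b)))
          with ((sqrt (A * (b / a)) * sqrt (A * (b / a))) * ((a / b) * (a/b))) by ring.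
        rewrite sqrt_sqrt. field; lra.
        apply Rmult_le_pos; [lra|]. apply Rlt_le, Rdiv_lt_0_compat; lra. }
    rewrite <- E.
    replace ((-1) ^ k' * (-1) ^ k') with 1.
    + ring.
    + rewrite <- pow_add. replace (k' + k')%nat with (2 * k')%nat by lia. rewrite pow_1_even. reflexivity.
Qed.

Lemma fold_perm l l' : Permutation l l' -> fold_right Rplus 0 l = fold_right Rplus 0 l'.
Proof.
  induction 1; simpl; try lra.
Qed.

Lemma sumK_ext K f g : (forall k, (k < K)%nat -> f k = g k) -> sumK K f = sumK K g.
Proof.
  intros H. unfold sumK. assert (Hl : forall k, In k (seq 0 K) -> f k = g k).
  { intros k Hk. apply in_seq in Hk. apply H. lia. }
  induction (seq 0 K) as [|a l IH]; simpl; [reflexivity|].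
  rewrite Hl by (left; reflexivity). rewrite IH; [reflexivity|].
  intros k Hk; apply Hl; right; exact Hk.
Qed.

Lemma sumK_scal K c f : sumK K (fun k => c * f k) = c * sumK K f.
Proof.
  unfold sumK. induction (seq 0 K) as [|a l IH]; simpl; [ring|]. rewrite IH. ring.
Qed.

Lemma sumK_zero K : sumK K (fun _ => 0) = 0.
Proof. unfold sumK. induction (seq 0 K) as [|a l IH]; simpl; [ring|]. rewrite IH. ring. Qed.

Lemma sumK_invol K f (s : nat -> nat) :
  (forall k, (k < K)%nat -> (s k < K)%nat) -> (forall k, (k < K)%nat -> s (s k) = k) ->
  sumK K (fun k => f (s k)) = sumK K f.
Proof.
  intros H1 H2. unfold sumK. rewrite <- map_map. apply fold_perm. apply Permutation_map.
  apply Permutation_map_same_l.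
  - apply FinFun.Injective_map_NoDup_in; [|apply seq_NoDup].
    intros x y Hx Hy E. apply in_seq in Hx, Hy.
    rewrite <- (H2 x), <- (H2 y), E by lia. reflexivity.
  - intros y Hy. apply in_map_iff in Hy. destruct Hy as [x [<- Hx]].
    apply in_seq in Hx. apply in_seq. specialize (H1 x). lia.
Qed.

Lemma sum_sym K g (s : nat -> nat) c :
  (forall k, (k < K)%nat -> (s k < K)%nat) -> (forall k, (k < K)%nat -> s (s k) = k) ->
  (forall k, (k < K)%nat -> g (s k) = c * g k) -> sumK K g = c * sumK K g.
Proof.
  intros H1 H2 H3. transitivity (sumK K (fun k => g (s k))).
  - symmetry. apply sumK_invol; assumption.
  - rewrite <- sumK_scal. apply sumK_ext. exact H3.
Qed.

Lemma choose_fun K (P : nat -> nat -> Prop) :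
  (forall k, (k < K)%nat -> exists j, P k j) -> exists f : nat -> nat, forall k, (k < K)%nat -> P k (f k).
Proof.
  intros H.
  exists (fun k => match lt_dec k K with
                   | left Hk => proj1_sig (constructive_indefinite_description _ (H k Hk))
                   | right _ => 0%nat end).
  intros k Hk. destruct (lt_dec k K) as [Hk'|Hk']; [|lia].
  apply proj2_sig.
Qed.

Lemma sin_eq_of_cos2 a b : 0 <= a <= PI -> 0 <= b <= PI -> cos a ^ 2 = cos b ^ 2 -> sin a = sin b.
Proof.
  intros Ha Hb H.
  assert (Sa := sin_ge_0 a (proj1 Ha) (proj2 Ha)).
  assert (Sb := sin_ge_0 b (proj1 Hb) (proj2 Hb)).
  assert (Ea := sin2_cos2 a). assert (Eb := sin2_cos2 b). unfold Rsqr in Ea, Eb.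
  assert (E : (sin a - sin b) * (sin a + sin b) = 0) by nra.
  apply Rmult_integral in E. destruct E; nra.
Qed.

Lemma cos2_of_sin0 a : sin a = 0 -> cos a ^ 2 = 1.
Proof. intros H. assert (E := sin2_cos2 a). unfold Rsqr in E. rewrite H in E. nra. Qed.

Lemma Yz n m tj pj tk pk : 0 <= tj <= PI -> 0 <= tk <= PI ->
  sph_point tj pj = Rz (sph_point tk pk) ->
  Y_re n m tj pj = (-1)^(Z.abs_nat m) * Y_re n m tk pk /\
  Y_im n m tj pj = (-1)^(Z.abs_nat m) * Y_im n m tk pk.
Proof.
  intros Hj Hk H. unfold sph_point, Rz in H. injection H as H1 H2 H3.
  assert (Es : sin tj = sin tk) by (apply sin_eq_of_cos2; auto; rewrite H3; ring).
  unfold Y_re, Y_im. rewrite H3.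
  destruct (Req_dec (sin tk) 0) as [Z0|NZ].
  - destruct (Z.eq_dec m 0) as [->|Hm].
    + simpl. rewrite !Rmult_0_l. split; ring.
    + rewrite (AL_pole n m (cos tk)) by (auto; apply cos2_of_sin0; auto). split; ring.
  - rewrite Es in H1, H2.
    assert (C : cos pj = - cos pk) by (apply (Rmult_eq_reg_l (sin tk)); [lra|auto]).
    assert (S : sin pj = - sin pk) by (apply (Rmult_eq_reg_l (sin tk)); [lra|auto]).
    destruct (trig_z pj pk m C S) as [C' S']. rewrite C', S'. split; ring.
Qed.

Lemma Yx n m tj pj tk pk : 0 <= tj <= PI -> 0 <= tk <= PI ->
  sph_point tj pj = Rx (sph_point tk pk) ->
  Y_re n m tj pj = (-1)^(n + Z.abs_nat m) * Y_re n m tk pk /\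
  Y_im n m tj pj = - ((-1)^(n + Z.abs_nat m) * Y_im n m tk pk).
Proof.
  intros Hj Hk H. unfold sph_point, Rx in H. injection H as H1 H2 H3.
  assert (Es : sin tj = sin tk) by (apply sin_eq_of_cos2; auto; rewrite H3; ring).
  unfold Y_re, Y_im. rewrite H3, AL_neg.
  destruct (Req_dec (sin tk) 0) as [Z0|NZ].
  - destruct (Z.eq_dec m 0) as [->|Hm].
    + simpl. rewrite !Rmult_0_l. rewrite sin_0. split; ring.
    + rewrite (AL_pole n m (cos tk)) by (auto; apply cos2_of_sin0; auto). split; ring.
  - rewrite Es in H1, H2.
    assert (C : cos pj = cos pk) by (apply (Rmult_eq_reg_l (sin tk)); [lra|auto]).
    assert (S : sin pj = - sin pk) by (apply (Rmult_eq_reg_l (sin tk)); [lra|auto]).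
    destruct (trig_x pj pk m C S) as [C' S']. rewrite C', S'. split; ring.
Qed.

Lemma delta_m n m : m <> 0%Z -> delta00 n m = 0.
Proof. intros H. unfold delta00. destruct (Z.eqb_spec m 0); [congruence|]. rewrite Bool.andb_false_r. reflexivity. Qed.
Lemma delta_n n m : n <> 0%nat -> delta00 n m = 0.
Proof. intros H. unfold delta00. destruct (Nat.eqb_spec n 0); [congruence|]. reflexivity. Qed.

Lemma pow_even k : Nat.Even k -> (-1)^k = 1.
Proof. intros [p ->]. apply pow_1_even. Qed.
Lemma pow_odd k : Nat.Odd k -> (-1)^k = -1.
Proof. intros [p ->]. rewrite Nat.add_1_r. apply pow_1_odd. Qed.

Lemma sumK_opp K f : sumK K (fun k => - f k) = - sumK K f.
Proof. rewrite <- (Rmult_1_l (sumK K f)), Ropp_mult_distr_l, <- sumK_scal. apply sumK_ext. intros; ring. Qed.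

Lemma Q_neg K w theta phi n a : (a <= n)%nat ->
  QY_re K w theta phi n (- Z.of_nat a) = (-1)^a * QY_re K w theta phi n (Z.of_nat a) /\
  QY_im K w theta phi n (- Z.of_nat a) = - ((-1)^a * QY_im K w theta phi n (Z.of_nat a)).
Proof.
  intros Ha. unfold QY_re, QY_im. split.
  - rewrite <- (sumK_scal K ((-1)^a)). apply sumK_ext. intros k _. unfold Y_re.
    rewrite Y_negorder by exact Ha. rewrite opp_IZR, Ropp_mult_distr_l_reverse, cos_neg. ring.
  - rewrite <- (sumK_scal K ((-1)^a)), <- sumK_opp. apply sumK_ext. intros k _. unfold Y_im.
    rewrite Y_negorder by exact Ha. rewrite opp_IZR, Ropp_mult_distr_l_reverse, sin_neg. ring.
Qed.

Lemma Q_im0 K w theta phi n : QY_im K w theta phi n 0 = 0.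
Proof.
  unfold QY_im. rewrite <- (sumK_zero K). apply sumK_ext. intros k _.
  unfold Y_im. simpl. rewrite Rmult_0_l, sin_0. ring.
Qed.

Theorem theorem1 (N K : nat) (w theta phi : nat -> R)
  (Hpolar : forall k, (k < K)%nat -> 0 <= theta k <= PI /\ 0 <= phi k < 2 * PI)
  (Hsym_z : forall k, (k < K)%nat ->
     exists j, (j < K)%nat
       /\ sph_point (theta j) (phi j) = Rz (sph_point (theta k) (phi k))
       /\ w j = w k
       /\ (forall j', (j' < K)%nat ->
             sph_point (theta j') (phi j') = Rz (sph_point (theta k) (phi k)) -> j' = j))
  (Hsym_x : forall k, (k < K)%nat ->
     exists j, (j < K)%nat
       /\ sph_point (theta j) (phi j) = Rx (sph_point (theta k) (phi k))
       /\ w j = w k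
       /\ (forall j', (j' < K)%nat ->
             sph_point (theta j') (phi j') = Rx (sph_point (theta k) (phi k)) -> j' = j)) :
  (forall (n : nat) (m : Z), (n <= N)%nat -> (Z.abs m <= Z.of_nat n)%Z ->
      QY_re K w theta phi n m = sqrt (4 * PI) * delta00 n m
      /\ QY_im K w theta phi n m = 0)
  <->
  ((forall n m : nat, Nat.Even m -> Nat.Even n -> (m <= n)%nat -> (n <= N)%nat ->
      QY_re K w theta phi n (Z.of_nat m) = sqrt (4 * PI) * delta00 n (Z.of_nat m))
   /\
   (forall n m : nat, Nat.Even m -> Nat.Odd n -> (0 < m)%nat -> (m <= n)%nat -> (n <= N)%nat ->
      QY_im K w theta phi n (Z.of_nat m) = 0)).
Proof.
  split.
  - intros H. split.
    + intros n m _ _ Hmn HnN. apply H; lia.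
    + intros n m _ _ _ Hmn HnN. apply H; lia.
  - intros [H1 H2].
    destruct (choose_fun K _ Hsym_z) as [sz Hz].
    destruct (choose_fun K _ Hsym_x) as [sx Hx].
    assert (Rzz : forall p, Rz (Rz p) = p)
      by (intros [[a b] c]; simpl; rewrite !Ropp_involutive; reflexivity).
    assert (Rxx : forall p, Rx (Rx p) = p)
      by (intros [[a b] c]; simpl; rewrite !Ropp_involutive; reflexivity).
    assert (zK : forall k, (k < K)%nat -> (sz k < K)%nat) by (intros k Hk; apply (Hz k Hk)).
    assert (xK : forall k, (k < K)%nat -> (sx k < K)%nat) by (intros k Hk; apply (Hx k Hk)).
    assert (zz : forall k, (k < K)%nat -> sz (sz k) = k).
    { intros k Hk. destruct (Hz k Hk) as [Hk1 [Hk2 _]].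
      destruct (Hz (sz k) Hk1) as [_ [_ [_ U]]]. symmetry. apply U; [exact Hk|].
      rewrite Hk2, Rzz. reflexivity. }
    assert (xx : forall k, (k < K)%nat -> sx (sx k) = k).
    { intros k Hk. destruct (Hx k Hk) as [Hk1 [Hk2 _]].
      destruct (Hx (sx k) Hk1) as [_ [_ [_ U]]]. symmetry. apply U; [exact Hk|].
      rewrite Hk2, Rxx. reflexivity. }
    assert (Rez : forall n m, QY_re K w theta phi n m = (-1)^(Z.abs_nat m) * QY_re K w theta phi n m).
    { intros n m. unfold QY_re. apply (sum_sym K _ sz _ zK zz).
      intros k Hk. destruct (Hz k Hk) as [Hk1 [Hk2 [Hk3 _]]].
      destruct (Yz n m _ _ _ _ (proj1 (Hpolar _ Hk1)) (proj1 (Hpolar _ Hk)) Hk2) as [A _].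
      rewrite A, Hk3. ring. }
    assert (Imz : forall n m, QY_im K w theta phi n m = (-1)^(Z.abs_nat m) * QY_im K w theta phi n m).
    { intros n m. unfold QY_im. apply (sum_sym K _ sz _ zK zz).
      intros k Hk. destruct (Hz k Hk) as [Hk1 [Hk2 [Hk3 _]]].
      destruct (Yz n m _ _ _ _ (proj1 (Hpolar _ Hk1)) (proj1 (Hpolar _ Hk)) Hk2) as [_ A].
      rewrite A, Hk3. ring. }
    assert (Rex : forall n m, QY_re K w theta phi n m = (-1)^(n + Z.abs_nat m) * QY_re K w theta phi n m).
    { intros n m. unfold QY_re. apply (sum_sym K _ sx _ xK xx).
      intros k Hk. destruct (Hx k Hk) as [Hk1 [Hk2 [Hk3 _]]].
      destruct (Yx n m _ _ _ _ (proj1 (Hpolar _ Hk1)) (proj1 (Hpolar _ Hk)) Hk2) as [A _].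
      rewrite A, Hk3. ring. }
    assert (Imx : forall n m, QY_im K w theta phi n m = - (-1)^(n + Z.abs_nat m) * QY_im K w theta phi n m).
    { intros n m. unfold QY_im. apply (sum_sym K _ sx _ xK xx).
      intros k Hk. destruct (Hx k Hk) as [Hk1 [Hk2 [Hk3 _]]].
      destruct (Yx n m _ _ _ _ (proj1 (Hpolar _ Hk1)) (proj1 (Hpolar _ Hk)) Hk2) as [_ A].
      rewrite A, Hk3. ring. }
    intros n m HnN Hmn.
    set (a := Z.abs_nat m).
    assert (Ham : m = Z.of_nat a \/ m = (- Z.of_nat a)%Z) by (unfold a; lia).
    assert (Han : (a <= n)%nat) by (unfold a; lia).
    destruct (Nat.Even_or_Odd a) as [Ea|Oa].
    + destruct (Nat.Even_or_Odd n) as [En|On].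
      * (* n even: Im = 0 by Rx *)
        assert (Enа : Nat.Even (n + a)) by (apply Nat.Even_Even_add; assumption).
        split.
        -- destruct Ham as [Hm|Hm].
           ++ rewrite Hm. apply H1; assumption.
           ++ rewrite Hm. destruct (Q_neg K w theta phi n a Han) as [R _]. rewrite R.
              rewrite pow_even by exact Ea. rewrite Rmult_1_l, H1 by assumption.
              destruct (Nat.eq_dec a 0) as [A0|A0].
              ** rewrite A0. reflexivity.
              ** rewrite !delta_m by lia. reflexivity.
        -- specialize (Imx n m). fold a in Imx. rewrite pow_even in Imx by assumption. lra.
      * assert (Ona : Nat.Odd (n + a)) by (destruct On as [p Hp]; destruct Ea as [q Hq]; exists (p + q)%nat; lia).
        split.
        -- specialize (Rex n m). fold a in Rex. rewrite pow_odd in Rex by assumption.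
           rewrite delta_n by (intro; subst; destruct On as [p Hp]; lia). lra.
        -- destruct (Nat.eq_dec a 0) as [A0|A0].
           ++ replace m with 0%Z by (unfold a in A0; lia). apply Q_im0.
           ++ destruct Ham as [Hm|Hm].
              ** rewrite Hm. apply H2; auto; lia.
              ** rewrite Hm. destruct (Q_neg K w theta phi n a Han) as [_ I]. rewrite I.
                 rewrite H2 by (auto; lia). ring.
    + assert (Hm0 : m <> 0%Z) by (intro; subst; destruct Oa as [p Hp]; simpl in Hp; lia).
      specialize (Rez n m). specialize (Imz n m). fold a in Rez, Imz.
      rewrite pow_odd in Rez, Imz by assumption.
      rewrite delta_m by exact Hm0. split; lra.
Qed.
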